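(* Let $\mathcal{E}^*$ be any function mapping pairs (an $\mathcal{ALC}$-formula, an interpretation) to $\mathcal{ALC}$-formulae, let $\varphi$ be an $\mathcal{ALC}$-formula and $M$ an interpretation. If $\mathrm{Mod}(\mathcal{E}^*(\varphi,M))=\mathrm{Mod}(\varphi)\cup[M]_\varphi$, then (i) $\mathcal{E}^*(\varphi,M)\equiv\varphi$ if $M\models\varphi$, and (ii) $\mathcal{E}^*(\varphi,M)\equiv\varphi\vee\bigwedge\mathrm{lit}(f)$ if $M\not\models\varphi$, where $\mathrm{qm}(\neg\varphi,M)=(T,o,f)$.
   Context: $\mathcal{ALC}$ concepts: $C::=A\mid\neg C\mid(C\sqcap C)\mid\exists r.C$. $\mathcal{ALC}$-formulae: $\phi::=\alpha\mid\neg\phi\mid(\phi\wedge\phi)$, atomic $\alpha::=C(a)\mid r(a,b)\mid(C=\top)$; $\neg\neg\psi$ identified with $\psi$; $\vee$ usual abbreviation. A literal is an atomic formula or its negation. Interpretations: countable nonempty domain, standard semantics. $\mathrm{Mod}(\varphi)$: interpretations satisfying $\varphi$; $\equiv$: same models. $\mathrm{Sub}(\alpha)=\mathrm{Sub}(\neg\alpha)=\{\alpha,\neg\alpha\}$ for atomic $\alpha$; $\mathrm{Sub}(\psi\wedge\psi')=\mathrm{Sub}(\neg(\psi\wedge\psi'))=\{\psi\wedge\psi',\neg(\psi\wedge\psi')\}\cup\mathrm{Sub}(\psi)\cup\mathrm{Sub}(\psi')$. $\mathrm{con}(\varphi)$: smallest set of concepts containing $C$ whenever $(C=\top)$ or $C(a)$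 lies in $\mathrm{Sub}(\varphi)$, closed under subconcepts of $\sqcap$, $\exists r.\cdot$, and under single negation. For an interpretation $I$, $\mathrm{qm}(\varphi,I)=(T,o,f)$ with $T=\{c(x)\mid x\in\Delta^I\}$, $c(x)=\{C\in\mathrm{con}(\varphi)\mid x\in C^I\}$, $o(a)=c(a^I)$, $f=\{\psi\in\mathrm{Sub}(\varphi)\mid I\models\psi\}$. $\mathrm{lit}(f)$: literals in $f$. $\mathcal{L}_{lit}(\varphi)$: Boolean combinations of atomic formulae occurring in $\varphi$; $M'\equiv_\varphi M$ iff they satisfy the same formulae of $\mathcal{L}_{lit}(\varphi)$; $[M]_\varphi=\{M'\mid M'\equiv_\varphi M\}$. *)

(* Defs.v *)
From Stdlib Require Import List Classical ClassicalDescription.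
Import ListNotations.
Set Implicit Arguments.

(* Concept names, role names and individual names are each indexed by nat. *)
Inductive concept : Type :=
| CName : nat -> concept
| CNeg : concept -> concept
| CAnd : concept -> concept -> concept
| CEx : nat -> concept -> concept.

(* Atomic formulae: C(a), r(a,b), (C = T). *)
Inductive atom : Type :=
| AConc : concept -> nat -> atom
| ARole : nat -> nat -> nat -> atom
| ATop : concept -> atom.

Inductive formula : Type :=
| FAt : atom -> formula
| FNeg : formula -> formula
| FAnd : formula -> formula -> formula.

Definition FOr (p q : formula) : formula := FNeg (FAnd (FNeg p) (FNeg q)).

Record Interp : Type := {
  dom : Type;
  cint : nat -> dom -> Prop;
  rint : nat -> dom -> dom -> Prop;
  iint : nat -> dom;
  dom_nonempty : inhabited dom;
  dom_countable : exists f : dom -> nat, forall x y, f x = f y -> x = y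
}.

Fixpoint csem (I : Interp) (C : concept) : dom I -> Prop :=
  match C with
  | CName A => cint I A
  | CNeg D => fun x => ~ csem I D x
  | CAnd D E => fun x => csem I D x /\ csem I E x
  | CEx r D => fun x => exists y, rint I r x y /\ csem I D y
  end.

Definition asat (I : Interp) (a : atom) : Prop :=
  match a with
  | AConc C n => csem I C (iint I n)
  | ARole r m n => rint I r (iint I m) (iint I n)
  | ATop C => forall x, csem I C x
  end.

Fixpoint sat (I : Interp) (p : formula) : Prop :=
  match p with
  | FAt a => asat I a
  | FNeg q => ~ sat I q
  | FAnd q r => sat I q /\ sat I r
  end.

Definition Mod (p : formula) : Interp -> Prop := fun I => sat I p.
Definition fequiv (p q : formula) : Prop := forall I, Mod p I <-> Mod q I.

Fixpoint atoms_of (p : formula) : list atom :=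
  match p with
  | FAt a => [a]
  | FNeg q => atoms_of q
  | FAnd q r => atoms_of q ++ atoms_of r
  end.

(* L_lit(phi): Boolean combinations of atomic formulae occurring in phi. *)
Definition in_Llit (phi psi : formula) : Prop :=
  forall a, In a (atoms_of psi) -> In a (atoms_of phi).

Definition lit_equiv (phi : formula) (M' M : Interp) : Prop :=
  forall psi, in_Llit phi psi -> (sat M' psi <-> sat M psi).

Definition lit_class (phi : formula) (M : Interp) : Interp -> Prop :=
  fun M' => lit_equiv phi M' M.

(* Sub(phi); Sub(~psi) = Sub(psi) for every psi (with ~~psi identified with psi). *)
Fixpoint Sub (p : formula) : list formula :=
  match p with
  | FAt a => [FAt a; FNeg (FAt a)]
  | FNeg q => Sub q
  | FAnd q r => FAnd q r :: FNeg (FAnd q r) :: Sub q ++ Sub r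
  end.

Definition cneg (C : concept) : concept :=
  match C with CNeg D => D | _ => CNeg C end.

Fixpoint subconcepts (C : concept) : list concept :=
  C :: match C with
       | CName _ => []
       | CNeg D => subconcepts D
       | CAnd D E => subconcepts D ++ subconcepts E
       | CEx _ D => subconcepts D
       end.

Definition base_concepts (p : formula) : list concept :=
  flat_map (fun q => match q with
                     | FAt (AConc C _) => [C]
                     | FAt (ATop C) => [C]
                     | _ => []
                     end) (Sub p).

Definition con (p : formula) : list concept :=
  let S := flat_map subconcepts (base_concepts p) in
  S ++ map cneg S.

Definition is_literal (p : formula) : bool :=
  match p with
  | FAt _ => true
  | FNeg (FAt _) => true
  | _ => false
  end.

Definition satb (I : Interp) (p : formula) : bool :=
  if excluded_middle_informative (sat I p) then true else false.

Record QM (I : Interp) : Type := {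
  qm_T : (concept -> Prop) -> Prop;
  qm_o : nat -> (concept -> Prop);
  qm_f : list formula
}.

Definition qm (phi : formula) (I : Interp) : QM I :=
  let c := fun x : dom I => fun C => In C (con phi) /\ csem I C x in
  {| qm_T := fun S => exists x, S = c x;
     qm_o := fun a => c (iint I a);
     qm_f := filter (satb I) (Sub phi) |}.

Definition lit (f : list formula) : list formula := filter is_literal f.

(* finite conjunction; the empty case (never used for lit(f), which is
   always nonempty) is a tautology *)
Fixpoint bigAnd (l : list formula) : formula :=
  match l with
  | [] => FOr (FAt (ATop (CName 0))) (FNeg (FAt (ATop (CName 0))))
  | [x] => x
  | x :: xs => FAnd x (bigAnd xs)
  end.

(* Main.v *)
Require Import Defs.
From Stdlib Require Import List Classical ClassicalDescription.
Import ListNotations.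

Lemma bigAnd_sat I l : sat I (bigAnd l) <-> (forall x, In x l -> sat I x).
Proof.
  induction l as [|x l IH].
  - cbn. split; [intros _ x []|]. intros _ [H1 H2]. exact (H2 H1).
  - destruct l as [|y l'].
    + cbn. split; [intros H z [<-|[]]; exact H|intros H; apply H; left; reflexivity].
    + change (bigAnd (x :: y :: l')) with (FAnd x (bigAnd (y :: l'))).
      cbn [sat]. rewrite IH. split.
      * intros [Hx Hr] z [<-|Hz]; [exact Hx|apply Hr; exact Hz].
      * intros H. split; [apply H; left; reflexivity|intros z Hz; apply H; right; exact Hz].
Qed.

Lemma satb_true I p : satb I p = true <-> sat I p.
Proof.
  unfold satb. destruct (excluded_middle_informative (sat I p)); split; auto; discriminate.
Qed.

Lemma Sub_lit p l : In l (Sub p) -> is_literal l = true ->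
  exists a, In a (atoms_of p) /\ (l = FAt a \/ l = FNeg (FAt a)).
Proof.
  induction p; cbn.
  - intros [<-|[<-|[]]] _; exists a; split; auto.
  - exact IHp.
  - intros [<-|[<-|H]] Hl; try discriminate.
    apply in_app_or in H as [H|H].
    + destruct (IHp1 H Hl) as [a [Ha E]]. exists a; split; auto. apply in_or_app; auto.
    + destruct (IHp2 H Hl) as [a [Ha E]]. exists a; split; auto. apply in_or_app; auto.
Qed.

Lemma atoms_Sub p a : In a (atoms_of p) -> In (FAt a) (Sub p) /\ In (FNeg (FAt a)) (Sub p).
Proof.
  induction p; cbn.
  - intros [<-|[]]; auto.
  - exact IHp.
  - intros H. apply in_app_or in H as [H|H].
    + destruct (IHp1 H). split; right; right; apply in_or_app; auto.
    + destruct (IHp2 H). split; right; right; apply in_or_app; auto.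
Qed.

Lemma atoms_agree phi I M :
  (forall a, In a (atoms_of phi) -> (asat I a <-> asat M a)) -> lit_equiv phi I M.
Proof.
  intros H psi. unfold in_Llit. induction psi; cbn; intros Hin.
  - apply H, Hin; left; reflexivity.
  - rewrite IHpsi; [tauto|exact Hin].
  - rewrite IHpsi1, IHpsi2; [tauto| |]; intros a Ha; apply Hin, in_or_app; auto.
Qed.

Lemma key phi M I :
  sat I (bigAnd (lit (filter (satb M) (Sub phi)))) <-> lit_class phi M I.
Proof.
  rewrite bigAnd_sat. unfold lit. split.
  - intros H. apply atoms_agree. intros a Ha.
    destruct (atoms_Sub _ _ Ha) as [H1 H2].
    destruct (classic (asat M a)) as [Hm|Hm].
    + assert (sat I (FAt a)); [|cbn in *; tauto].
      apply H. apply filter_In; split; [apply filter_In; split; auto|reflexivity].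
      apply satb_true; exact Hm.
    + assert (sat I (FNeg (FAt a))); [|cbn in *; tauto].
      apply H. apply filter_In; split; [apply filter_In; split; auto|reflexivity].
      apply satb_true; exact Hm.
  - intros H x Hx. apply filter_In in Hx as [Hx Hl].
    apply filter_In in Hx as [Hx Hs]. apply satb_true in Hs.
    destruct (Sub_lit _ _ Hx Hl) as [a [Ha [->| ->]]].
    + apply (H (FAt a)); [intros b [<-|[]]; exact Ha|exact Hs].
    + apply (H (FNeg (FAt a))); [intros b [<-|[]]; exact Ha|exact Hs].
Qed.

Theorem mainTheorem6 (Estar : formula -> Interp -> formula) (phi : formula) (M : Interp) :
  (forall I, Mod (Estar phi M) I <-> (Mod phi I \/ lit_class phi M I)) ->
  (sat M phi -> fequiv (Estar phi M) phi) /\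
  (~ sat M phi ->
     fequiv (Estar phi M) (FOr phi (bigAnd (lit (qm_f (qm (FNeg phi) M)))))).
Proof.
  intros HE. split.
  - intros HM I. rewrite HE. unfold Mod. split; [|tauto].
    intros [H|H]; [exact H|]. apply (H phi); [intros a Ha; exact Ha|exact HM].
  - intros HM I. rewrite HE. unfold Mod. cbn [qm qm_f Sub sat FOr].
    rewrite key. split.
    + intros H [H1 H2]. destruct H; auto.
    + intros H. apply NNPP. intros H'. apply H. split; intros X; apply H'; auto.
Qed.
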